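(* The greedy forward search algorithm with criterion $\widehat G_\infty$ outputs a cross-group ordering $g$ with $$\Delta\mathrm{xAUC}(g)\le\max\Big(\frac{1}{n_1^a},\frac{1}{n_1^b}\Big).$$
   Context: Setting: two disjoint finite groups $a$, $b$ of samples, each sample $u$ having label $Y_u\in\{0,1\}$; $n^a,n^b$ group sizes, $n_1^a,n_0^a$ numbers of label-1/label-0 samples in $a$ (similarly for $b$), all $\ge1$, $k_{a,b}=n_1^an_0^b$, $k_{b,a}=n_0^an_1^b$. Fixed within-group rankings $\mathrm{p}^a=(\mathrm{p}^{a(1)},\dots,\mathrm{p}^{a(n^a)})$, $\mathrm{p}^b=(\mathrm{p}^{b(1)},\dots,\mathrm{p}^{b(n^b)})$. A cross-group ordering is a ranked list of all samples of $a\cup b$ whose restrictions to $a,b$ are $\mathrm{p}^a,\mathrm{p}^b$; $\mathrm{xAUC}_o(a,b)$ is the fraction of pairs (label-1 sample of $a$, label-0 sample of $b$) in which the first is ranked above the second, $\mathrm{xAUC}_o(b,a)$ symmetrically, $\Delta\mathrm{xAUC}(o)=|\mathrm{xAUC}_o(a,b)-\mathrm{xAUC}_o(b,a)|$. An $(i,j)$-partial ordering ($0\le i\le n^a$, $0\le j\le n^b$) is a ranked list of $\mathrm{p}^{a(1)},\dots,\mathrm{p}^{a(i)},\mathrm{p}^{b(1)},\dots,\mathrm{p}^{b(j)}$ preserving within-group orders. $H_{ab}(o)$ = number of pairs $(k,h)$ with $k\le i$, $h\le n^b$, $Y_{\mathrm{p}^{a(k)}}=1$, $Y_{\mathrm{p}^{b(h)}}=0$,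 and either $h>j$ or ($h\le j$ and $\mathrm{p}^{a(k)}$ precedes $\mathrm{p}^{b(h)}$ in $o$); $H_{ba}(o)$ = number of pairs $(h,k)$ with $h\le j$, $k\le n^a$, $Y_{\mathrm{p}^{b(h)}}=1$, $Y_{\mathrm{p}^{a(k)}}=0$, and either $k>i$ or ($k\le i$ and $\mathrm{p}^{b(h)}$ precedes $\mathrm{p}^{a(k)}$ in $o$). $\widehat G_\infty(o)=-|H_{ab}(o)/k_{a,b}-H_{ba}(o)/k_{b,a}|$; for a full ordering it equals $-\Delta\mathrm{xAUC}(o)$. Greedy forward search: start from the empty $(0,0)$-partial ordering $g$. While $g$ is an $(i,j)$-partial ordering with $(i,j)\ne(n^a,n^b)$: if $i<n^a$ and $j<n^b$, replace $g$ by $g\oplus\mathrm{p}^{a(i+1)}$ if $\widehat G_\infty(g\oplus\mathrm{p}^{a(i+1)})\ge\widehat G_\infty(g\oplus\mathrm{p}^{b(j+1)})$ and by $g\oplus\mathrm{p}^{b(j+1)}$ otherwise; if one group is exhausted, append the next element of the other group ($\oplus$ = append at the bottom). Output the final $g$. *)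

(* Defs.v *)
From mathcomp Require Import all_boot all_order all_algebra.
Set Implicit Arguments. Unset Strict Implicit. Unset Printing Implicit Defensive.
Import Order.TTheory GRing.Theory Num.Theory.
Local Open Scope ring_scope.

(* The sample ranked k-th (0-indexed) in group a, i.e. p^{a(k+1)},
   is encoded as (true, k); the k-th ranked sample of group b as (false, k).
   Labels are given along the fixed within-group rankings:
   ya`_k = Y_{p^{a(k+1)}}, yb`_h = Y_{p^{b(h+1)}} (true = label 1). *)
Definition sample := (bool * nat)%type.

Definition restr_a (o : seq sample) := [seq x <- o | x.1].
Definition restr_b (o : seq sample) := [seq x <- o | ~~ x.1].

Definition partial_ordering (i j : nat) (o : seq sample) : bool :=
  (restr_a o == [seq (true, k) | k <- iota 0 i]) &&
  (restr_b o == [seq (false, h) | h <- iota 0 j]).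

Definition cross_ordering (ya yb : seq bool) (o : seq sample) : bool :=
  partial_ordering (size ya) (size yb) o.

Definition precedes (o : seq sample) (x y : sample) : bool :=
  (index x o < index y o)%N.

Definition n1 (y : seq bool) : nat := count id y.
Definition n0 (y : seq bool) : nat := count negb y.

Definition xAUC_ab (ya yb : seq bool) (o : seq sample) : rat :=
  (\sum_(k < size ya) \sum_(h < size yb)
     [&& nth false ya k, ~~ nth false yb h & precedes o (true, val k) (false, val h)]
     : nat)%:R / (n1 ya * n0 yb)%:R.

Definition xAUC_ba (ya yb : seq bool) (o : seq sample) : rat :=
  (\sum_(h < size yb) \sum_(k < size ya)
     [&& nth false yb h, ~~ nth false ya k & precedes o (false, val h) (true, val k)]
     : nat)%:R / (n0 ya * n1 yb)%:R.

Definition DeltaxAUC (ya yb : seq bool) (o : seq sample) : rat :=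
  `|xAUC_ab ya yb o - xAUC_ba ya yb o|.

Definition ia (o : seq sample) : nat := size (restr_a o).
Definition jb (o : seq sample) : nat := size (restr_b o).

Definition H_ab (ya yb : seq bool) (o : seq sample) : nat :=
  \sum_(k < size ya) \sum_(h < size yb)
    [&& (val k < ia o)%N, nth false ya k, ~~ nth false yb h &
        (jb o <= val h)%N || ((val h < jb o)%N && precedes o (true, val k) (false, val h))].

Definition H_ba (ya yb : seq bool) (o : seq sample) : nat :=
  \sum_(h < size yb) \sum_(k < size ya)
    [&& (val h < jb o)%N, nth false yb h, ~~ nth false ya k &
        (ia o <= val k)%N || ((val k < ia o)%N && precedes o (false, val h) (true, val k))].

(* criterion \hat G_\infty, with k_{a,b} = n1^a n0^b, k_{b,a} = n0^a n1^b *)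
Definition Ghat (ya yb : seq bool) (o : seq sample) : rat :=
  - `| (H_ab ya yb o)%:R / (n1 ya * n0 yb)%:R
       - (H_ba ya yb o)%:R / (n0 ya * n1 yb)%:R |.

Definition greedy_step (ya yb : seq bool) (g : seq sample) : seq sample :=
  let i := ia g in let j := jb g in
  let ga := rcons g (true, i) in
  let gb := rcons g (false, j) in
  if ((i < size ya) && (j < size yb))%N then
    (if Ghat ya yb gb <= Ghat ya yb ga then ga else gb)
  else if (i < size ya)%N then ga else gb.

(* the loop runs while (i,j) <> (n^a,n^b); each step increases i+j by one,
   so it performs exactly n^a + n^b steps from the empty ordering *)
Definition greedy (ya yb : seq bool) : seq sample :=
  iter (size ya + size yb) (greedy_step ya yb) [::].

(* Main.v *)
Require Import Defs.
From mathcomp Require Import all_boot all_order all_algebra.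
From mathcomp Require Import ring lra zify.
Import Order.TTheory GRing.Theory Num.Theory.
Local Open Scope ring_scope.

Lemma po_mem i j g b k : partial_ordering i j g ->
  ((b, k) \in g) = (if b then k < i else k < j)%N.
Proof.
case/andP => /eqP Ha /eqP Hb.
case: b.
- have -> : ((true, k) \in g) = ((true, k) \in restr_a g) by rewrite mem_filter.
  rewrite Ha; apply/mapP/idP => [[k' Hk' [->]]|Hk].
    by move: Hk'; rewrite mem_iota.
  by exists k; rewrite // mem_iota.
- have -> : ((false, k) \in g) = ((false, k) \in restr_b g) by rewrite mem_filter.
  rewrite Hb; apply/mapP/idP => [[k' Hk' [->]]|Hk].
    by move: Hk'; rewrite mem_iota.
  by exists k; rewrite // mem_iota.
Qed.

Lemma po_ia i j g : partial_ordering i j g -> ia g = i.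
Proof. by case/andP => /eqP Ha _; rewrite /ia Ha size_map size_iota. Qed.

Lemma po_jb i j g : partial_ordering i j g -> jb g = j.
Proof. by case/andP => _ /eqP Hb; rewrite /jb Hb size_map size_iota. Qed.

Lemma po_rcons_a i j g : partial_ordering i j g ->
  partial_ordering i.+1 j (rcons g (true, i)).
Proof.
case/andP => /eqP Ha /eqP Hb; apply/andP; split; apply/eqP.
  by rewrite /restr_a filter_rcons -/(restr_a g) Ha -[in RHS](addn1 i) iotaD map_cat cats1.
by rewrite /restr_b filter_rcons /=.
Qed.

Lemma po_rcons_b i j g : partial_ordering i j g ->
  partial_ordering i j.+1 (rcons g (false, j)).
Proof.
case/andP => /eqP Ha /eqP Hb; apply/andP; split; apply/eqP.
  by rewrite /restr_a filter_rcons /=.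
by rewrite /restr_b filter_rcons -/(restr_b g) Hb -[in RHS](addn1 j) iotaD map_cat cats1.
Qed.

Lemma prec_old (g : seq sample) x y z : x \in g -> z \in g ->
  precedes (rcons g y) x z = precedes g x z.
Proof. by move=> hx hz; rewrite /precedes -cats1 !index_cat hx hz. Qed.

Lemma prec_new_l (g : seq sample) y z : y \notin g -> z \in g ->
  precedes (rcons g y) y z = false.
Proof.
move=> hy hz; rewrite /precedes -cats1 !index_cat hz (negbTE hy) /= eqxx addn0.
by apply/negbTE; rewrite -leqNgt ltnW // index_mem.
Qed.

Lemma prec_new_r (g : seq sample) y x : y \notin g -> x \in g ->
  precedes (rcons g y) x y = true.
Proof.
move=> hy hx; rewrite /precedes -cats1 !index_cat hx (negbTE hy) /= eqxx addn0.
by rewrite index_mem.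
Qed.

Arguments po_mem {i j g} b k.
Arguments po_ia {i j g}.
Arguments po_jb {i j g}.
Arguments po_rcons_a {i j g}.
Arguments po_rcons_b {i j g}.

Lemma count_neg (s : seq bool) :
  (\sum_(h < size s) (~~ nth false s h : nat))%N = count negb s.
Proof.
elim: s => [|x s IH]; first by rewrite big_ord0.
by rewrite /= big_ord_recl /= IH.
Qed.

Section Steps.
Variables (ya yb : seq bool).

Lemma Hba_step_a i j g : partial_ordering i j g ->
  H_ba ya yb (rcons g (true, i)) = H_ba ya yb g.
Proof.
move=> po; have po' := po_rcons_a po.
rewrite /H_ba (po_ia po) (po_jb po) (po_ia po') (po_jb po').
apply: eq_bigr => [[h hh]] _; apply: eq_bigr => [[k hk]] _ /=.
case: (ltnP h j) => hj //=.
have hin : (false, h) \in g by rewrite (po_mem _ _ po).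
have nin : (true, i) \notin g by rewrite (po_mem _ _ po) ltnn.
have [hki|hki|hki] := ltngtP k i.
- rewrite prec_old //; last by rewrite (po_mem _ _ po).
  have -> : (k < i.+1)%N = true by lia.
  by [].
- by [].
- subst k; by rewrite prec_new_r // ltnSn.
Qed.

Lemma Hab_step_b i j g : partial_ordering i j g ->
  H_ab ya yb (rcons g (false, j)) = H_ab ya yb g.
Proof.
move=> po; have po' := po_rcons_b po.
rewrite /H_ab (po_ia po) (po_jb po) (po_ia po') (po_jb po').
apply: eq_bigr => [[k hk]] _; apply: eq_bigr => [[h hh]] _ /=.
case: (ltnP k i) => hi //=.
have hin : (true, k) \in g by rewrite (po_mem _ _ po).
have nin : (false, j) \notin g by rewrite (po_mem _ _ po) ltnn.
have [hhj|hhj|hhj] := ltngtP h j.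
- rewrite prec_old //; last by rewrite (po_mem _ _ po).
  have -> : (h < j.+1)%N = true by lia.
  by [].
- by [].
- subst h; by rewrite prec_new_r // ltnSn.
Qed.
End Steps.

Section Steps2.
Variables (ya yb : seq bool).

Lemma Hab_step_a i j g (hi : (i < size ya)%N) : partial_ordering i j g ->
  H_ab ya yb (rcons g (true, i)) = (H_ab ya yb g +
   \sum_(h < size yb) [&& nth false ya i, ~~ nth false yb h & (j <= h)%N])%N.
Proof.
move=> po; have po' := po_rcons_a po.
rewrite /H_ab (po_ia po) (po_jb po) (po_ia po') (po_jb po').
have nin : (true, i) \notin g by rewrite (po_mem _ _ po) ltnn.
rewrite (bigD1 (Ordinal hi)) // [X in _ = (X + _)%N](bigD1 (Ordinal hi)) //=.
rewrite [X in _ = (X + _ + _)%N]big1 ?add0n; last by move=> h _; rewrite ltnn.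
rewrite addnC; congr (_ + _)%N.
  apply: eq_bigr => [[k hk]] /= hki; apply: eq_bigr => [[h hh]] _ /=.
  have hki' : k != i by apply: contra hki => /eqP E; apply/eqP/val_inj.
  case: (ltnP k i) => hk2.
    have -> : (k < i.+1)%N = true by lia.
    case: (ltnP h j) => hj //=.
    by rewrite prec_old // (po_mem _ _ po).
  have -> : (k < i.+1)%N = false by lia.
  by [].
apply: eq_bigr => [[h hh]] _ /=.
rewrite ltnSn /=.
case: (ltnP h j) => hj /=.
  by rewrite prec_new_l // ?(po_mem _ _ po) // ?andbF.
by rewrite ?orbT.
Qed.

Lemma Hba_step_b i j g (hj : (j < size yb)%N) : partial_ordering i j g ->
  H_ba ya yb (rcons g (false, j)) = (H_ba ya yb g +
   \sum_(k < size ya) [&& nth false yb j, ~~ nth false ya k & (i <= k)%N])%N.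
Proof.
move=> po; have po' := po_rcons_b po.
rewrite /H_ba (po_ia po) (po_jb po) (po_ia po') (po_jb po').
have nin : (false, j) \notin g by rewrite (po_mem _ _ po) ltnn.
rewrite (bigD1 (Ordinal hj)) // [X in _ = (X + _)%N](bigD1 (Ordinal hj)) //=.
rewrite [X in _ = (X + _ + _)%N]big1 ?add0n; last by move=> k _; rewrite ltnn.
rewrite addnC; congr (_ + _)%N.
  apply: eq_bigr => [[h hh]] /= hhj; apply: eq_bigr => [[k hk]] _ /=.
  have hhj' : h != j by apply: contra hhj => /eqP E; apply/eqP/val_inj.
  case: (ltnP h j) => hk2.
    have -> : (h < j.+1)%N = true by lia.
    case: (ltnP k i) => hi //=.
    by rewrite prec_old // (po_mem _ _ po).
  have -> : (h < j.+1)%N = false by lia.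
  by [].
apply: eq_bigr => [[k hk]] _ /=.
rewrite ltnSn /=.
case: (ltnP k i) => hi /=.
  by rewrite prec_new_l // ?(po_mem _ _ po) // ?andbF.
by rewrite ?orbT.
Qed.
End Steps2.

Definition Dv (ya yb : seq bool) (g : seq sample) : rat :=
  (H_ab ya yb g)%:R / (n1 ya * n0 yb)%:R - (H_ba ya yb g)%:R / (n0 ya * n1 yb)%:R.

Lemma frac_bound (s c m : nat) : (0 < c)%N -> (0 < m)%N -> (s <= c)%N ->
  0 <= s%:R / (m * c)%:R :> rat /\ s%:R / (m * c)%:R <= m%:R^-1 :> rat.
Proof.
move=> hc hm hs; split; first by rewrite divr_ge0 ?ler0n.
have c0 : (c%:R : rat) != 0 by rewrite pnatr_eq0 -lt0n.
apply: (@le_trans _ _ (c%:R / (m * c)%:R)).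
  by rewrite ler_wpM2r ?invr_ge0 ?ler0n // ler_nat.
by rewrite natrM invfM mulrCA mulfV ?mulr1.
Qed.

Lemma Dv_step_a ya yb i j g : partial_ordering i j g -> (i < size ya)%N ->
  (0 < n1 ya)%N -> (0 < n0 yb)%N ->
  exists d, [/\ Dv ya yb (rcons g (true, i)) = Dv ya yb g + d,
     0 <= d, d <= (n1 ya)%:R^-1 & (j = size yb -> d = 0)].
Proof.
move=> po hi h1 h2.
set s := (\sum_(h < size yb) [&& nth false ya i, ~~ nth false yb h & (j <= h)%N])%N.
exists (s%:R / (n1 ya * n0 yb)%:R).
have hs : (s <= n0 yb)%N.
  rewrite /n0 -count_neg /s; apply: leq_sum => h _.
  by case: (nth false ya i); case: (nth false yb h); case: (j <= h)%N.
have [b1 b2] := frac_bound _ _ _ h2 h1 hs.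
split => //.
  by rewrite /Dv (Hab_step_a _ _ _ _ _ hi po) (Hba_step_a _ _ _ _ _ po) -/s natrD mulrDl addrAC.
move=> ej; rewrite /s big1 ?mul0r // => h _.
by rewrite ej leqNgt ltn_ord !andbF.
Qed.

Lemma Dv_step_b ya yb i j g : partial_ordering i j g -> (j < size yb)%N ->
  (0 < n0 ya)%N -> (0 < n1 yb)%N ->
  exists d, [/\ Dv ya yb (rcons g (false, j)) = Dv ya yb g - d,
     0 <= d, d <= (n1 yb)%:R^-1 & (i = size ya -> d = 0)].
Proof.
move=> po hj h1 h2.
set s := (\sum_(k < size ya) [&& nth false yb j, ~~ nth false ya k & (i <= k)%N])%N.
exists (s%:R / (n0 ya * n1 yb)%:R).
have hs : (s <= n0 ya)%N.
  rewrite /n0 -count_neg /s; apply: leq_sum => k _.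
  by case: (nth false yb j); case: (nth false ya k); case: (i <= k)%N.
have [b1 b2] := frac_bound _ _ _ h1 h2 hs.
rewrite mulnC; split => //.
  by rewrite /Dv (Hba_step_b _ _ _ _ _ hj po) (Hab_step_b _ _ _ _ _ po) -/s natrD mulrDl (mulnC (n1 yb)) opprD addrA.
move=> ei; rewrite /s big1 ?mul0r // => k _.
by rewrite ei leqNgt ltn_ord !andbF.
Qed.

Lemma choose_bound (D da db M : rat) : `|D| <= M -> 0 <= da -> da <= M ->
  0 <= db -> db <= M ->
  (`|D + da| <= `|D - db| -> `|D + da| <= M) /\
  (~~ (`|D + da| <= `|D - db|) -> `|D - db| <= M).
Proof.
move=> hD ha1 ha2 hb1 hb2.
move: hD; rewrite ler_norml => /andP [hD1 hD2].
have h1 : 0 <= D -> `|D - db| <= M.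
  by move=> h; rewrite ler_norml; apply/andP; split; lra.
have h2 : D <= 0 -> `|D + da| <= M.
  by move=> h; rewrite ler_norml; apply/andP; split; lra.
split => [hc|].
  case: (lerP 0 D) => hd; last by apply: h2; lra.
  exact: le_trans hc (h1 hd).
rewrite -ltNge => hc.
case: (lerP 0 D) => hd; first exact: h1.
exact: le_trans (ltW hc) (h2 (ltW hd)).
Qed.

Arguments Dv_step_a {ya yb i j g}.
Arguments Dv_step_b {ya yb i j g}.
Arguments choose_bound {D da db M}.

Lemma Dv_nil ya yb : Dv ya yb [::] = 0.
Proof.
rewrite /Dv.
have -> : H_ab ya yb [::] = 0%N.
  by rewrite /H_ab big1 // => k _; apply: big1 => h _; by rewrite /ia /= ?ltn0.
have -> : H_ba ya yb [::] = 0%N.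
  by rewrite /H_ba big1 // => h _; apply: big1 => k _; by rewrite /jb /= ?ltn0.
by rewrite !mul0r subrr.
Qed.

Lemma inv_greedy ya yb t :
  (0 < n1 ya)%N -> (0 < n0 ya)%N -> (0 < n1 yb)%N -> (0 < n0 yb)%N ->
  (t <= size ya + size yb)%N ->
  exists i j, [/\ partial_ordering i j (iter t (greedy_step ya yb) [::]),
    (i <= size ya)%N, (j <= size yb)%N, (i + j = t)%N &
    `|Dv ya yb (iter t (greedy_step ya yb) [::])| <=
      Num.max ((n1 ya)%:R^-1 : rat) ((n1 yb)%:R^-1)].
Proof.
move=> h1 h2 h3 h4.
set M := Num.max _ _.
have hMa : (n1 ya)%:R^-1 <= M by rewrite le_max lexx.
have hMb : (n1 yb)%:R^-1 <= M by rewrite le_max lexx orbT.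
elim: t => [|t IH] ht.
  exists 0%N, 0%N; split => //.
  rewrite Dv_nil normr0 (le_trans _ hMa) // invr_ge0 ler0n //.
have [i [j [po hi hj hij hD]]] := IH (ltnW ht).
rewrite iterS; set g := iter t _ _.
fold g in po, hD; clearbody g.
have GE : forall o, Ghat ya yb o = - `|Dv ya yb o| by [].
rewrite /greedy_step (po_ia po) (po_jb po).
case: (ltnP i (size ya)) => hi2; case: (ltnP j (size yb)) => hj2 /=.
- have [da [Ea da0 da1 _]] := Dv_step_a po hi2 h1 h4.
  have [db [Eb db0 db1 _]] := Dv_step_b po hj2 h2 h3.
  have [C1 C2] := choose_bound hD da0 (le_trans da1 hMa) db0 (le_trans db1 hMb).
  case: ifP => hc.
    have hc' : `|Dv ya yb (rcons g (true, i))| <= `|Dv ya yb (rcons g (false, j))|.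
      by rewrite -lerN2; exact: hc.
    exists i.+1, j; split; [exact: po_rcons_a| exact: hi2 | exact: hj | by rewrite addSn hij | ].
    rewrite Ea; apply: C1; rewrite -Ea -Eb; exact: hc'.
  have hc' : ~~ (`|Dv ya yb (rcons g (true, i))| <= `|Dv ya yb (rcons g (false, j))|).
    by rewrite -lerN2; apply/negbT; exact: hc.
  exists i, j.+1; split; [exact: po_rcons_b| exact: hi | exact: hj2 | by rewrite addnS hij | ].
  rewrite Eb; apply: C2; rewrite -Ea -Eb; exact: hc'.
- have [da [Ea _ _ da2]] := Dv_step_a po hi2 h1 h4.
  have ej : j = size yb by apply/eqP; rewrite eqn_leq hj hj2.
  exists i.+1, j; split; [exact: po_rcons_a| exact: hi2 | exact: hj | by rewrite addSn hij | ].
  by rewrite Ea (da2 ej) addr0.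
- have [db [Eb _ _ db2]] := Dv_step_b po hj2 h2 h3.
  have ei : i = size ya by apply/eqP; rewrite eqn_leq hi hi2.
  exists i, j.+1; split; [exact: po_rcons_b| exact: hi | exact: hj2 | by rewrite addnS hij | ].
  by rewrite Eb (db2 ei) subr0.
- by move: ht; rewrite -hij ltnNge leq_add.
Qed.

Arguments inv_greedy {ya yb t}.

Theorem mainTheorem7 (ya yb : seq bool) :
  (0 < n1 ya)%N -> (0 < n0 ya)%N -> (0 < n1 yb)%N -> (0 < n0 yb)%N ->
  cross_ordering ya yb (greedy ya yb) /\
  DeltaxAUC ya yb (greedy ya yb) <=
    Num.max ((n1 ya)%:R^-1 : rat) ((n1 yb)%:R^-1).
Proof.
move=> h1 h2 h3 h4.
have [i [j [po hi hj hij hD]]] := inv_greedy h1 h2 h3 h4 (leqnn _).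
have [ei ej] : i = size ya /\ j = size yb by clear hD; lia.
subst i j.
rewrite /greedy; set g := iter _ _ _ in po hD *.
split; first exact: po.
suff -> : DeltaxAUC ya yb g = `|Dv ya yb g| by [].
rewrite /DeltaxAUC /xAUC_ab /xAUC_ba /Dv /H_ab /H_ba (po_ia po) (po_jb po).
congr (`| _ / _ - _ / _ |); congr (_ %:R).
  apply: eq_bigr => k _; apply: eq_bigr => h _.
  by rewrite ltn_ord leqNgt ltn_ord.
apply: eq_bigr => h _; apply: eq_bigr => k _.
by rewrite ltn_ord leqNgt ltn_ord.
Qed.
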